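(* Assume (L). For $\nu>0$ define $\bar{\mathcal N}_\nu=\{x:f(x)\le f(x^\star)+\nu\lambda_{\min}^3/L^2\}$. Then for every $\nu\in(0,1]$, $$\bar{\mathcal N}_{\nu^2/3}\subseteq\mathcal N_\nu\subseteq\bar{\mathcal N}_{\nu^2}.$$
   Context: $f:\mathbb{R}^d\to\mathbb{R}$ is twice continuously differentiable with Hessian $H(x)=\nabla^2 f(x)$ satisfying $\lambda_{\min} I\preceq H(x)\preceq \lambda_{\max} I$ for all $x$, where $0<\lambda_{\min}\le\lambda_{\max}$; $x^\star$ is the unique minimizer of $f$ and $H^\star=H(x^\star)$; $\|v\|_A=\sqrt{v^\top Av}$. Lipschitz Hessian assumption (L): $\|H(x)-H(y)\|\le L\|x-y\|$ for all $x,y$ (spectral/Euclidean norms). Neighborhood: $\mathcal N_\nu=\{x:\|x-x^\star\|_{H^\star}\le \nu\lambda_{\min}^{3/2}/L\}$. *)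

(* Defs.v *)
From HB Require Import structures.
From mathcomp Require Import all_boot all_order all_algebra.
From mathcomp Require Import all_classical all_reals all_analysis.
Set Implicit Arguments. Unset Strict Implicit. Unset Printing Implicit Defensive.
Import Order.TTheory GRing.Theory Num.Theory.
Import numFieldNormedType.Exports.
Local Open Scope classical_set_scope.
Local Open Scope ring_scope.

Section Defs.
Variables (R : realType) (d : nat).

Definition enorm (v : 'rV[R]_d) : R := Num.sqrt (\sum_(i < d) v 0 i ^+ 2).

Definition qform (A : 'M[R]_d) (v : 'rV[R]_d) : R := (v *m A *m v^T) 0 0.

Definition Anorm (A : 'M[R]_d) (v : 'rV[R]_d) : R := Num.sqrt (qform A v).

Definition spec_norm (A : 'M[R]_d) : R :=
  sup [set enorm (v *m A) | v in [set v : 'rV[R]_d | enorm v = 1]].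

Definition loewner_le (A B : 'M[R]_d) : Prop := forall v, qform A v <= qform B v.

Definition nbhdN (xstar : 'rV[R]_d) (Hstar : 'M[R]_d) (lmin L nu : R)
  : set 'rV[R]_d :=
  [set x | Anorm Hstar (x - xstar) <= nu * (lmin * Num.sqrt lmin) / L].

Definition nbhdNbar (f : 'rV[R]_d -> R) (xstar : 'rV[R]_d) (lmin L nu : R)
  : set 'rV[R]_d :=
  [set x | f x <= f xstar + nu * lmin ^+ 3 / L ^+ 2].

End Defs.

(* Main.v *)
Require Import Defs.
From HB Require Import structures.
From mathcomp Require Import all_boot all_order all_algebra.
From mathcomp Require Import all_classical all_reals all_analysis.
From mathcomp Require Import ring lra.
Import Order.TTheory GRing.Theory Num.Theory.
Import numFieldNormedType.Exports.
Local Open Scope classical_set_scope.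
Local Open Scope ring_scope.
Set Implicit Arguments. Unset Strict Implicit.
Section Helpers.
Variables (R : realType) (d : nat).

Lemma line_is_derive (W : normedModType R) (F : 'rV[R]_d -> W) (a h : 'rV[R]_d) (t : R) :
  differentiable F (a + t *: h) ->
  is_derive t 1 (fun s : R => F (a + s *: h)) ('d F (a + t *: h) h).
Proof.
move=> dF.
have E : (fun s : R => s^-1 *: (((fun s0 : R => F (a + s0 *: h)) \o shift t) (s *: 1) - F (a + t *: h))) = (fun s : R => s^-1 *: ((F \o shift (a + t *: h)) (s *: h) - F (a + t *: h))).
  apply/funext => s /=.
  by rewrite -[s *: 1]/(s * 1) mulr1 scalerDl addrCA.
have D : 'D_1 (fun s : R => F (a + s *: h)) t = 'D_h F (a + t *: h) by rewrite /derive E.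
split.
- by rewrite /derivable E; exact: diff_derivable.
- by rewrite D deriveE.
Qed.

Lemma is_derive_coord m n (F : R -> 'M[R]_(m, n)) (t : R) (dF : 'M[R]_(m, n)) i j :
  is_derive t 1 F dF -> is_derive t 1 (fun s => F s i j) (dF i j).
Proof.
move=> [dF1 dv].
have cv : (fun s : R => s^-1 *: ((F \o shift t) (s *: 1) - F t)) @ 0^' --> dF.
  by rewrite -dv; exact: dF1.
have cv2 : (fun s : R => s^-1 *: (((fun s0 => F s0 i j) \o shift t) (s *: 1) - F t i j)) @ 0^' --> dF i j.
  have -> : (fun s : R => s^-1 *: (((fun s0 => F s0 i j) \o shift t) (s *: 1) - F t i j))
     = (fun M : 'M[R]_(m, n) => M i j) \o (fun s : R => s^-1 *: ((F \o shift t) (s *: 1) - F t)).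
    by apply/funext => s /=; rewrite !mxE.
  apply: cvg_comp cv _; exact: coord_continuous.
split; first by apply/cvg_ex; eexists; exact: cv2.
exact: cvg_lim cv2.
Qed.

End Helpers.
Section H1.
Variable (R : realType).

Lemma isdD (F G : R -> R) (x dF dG : R) : is_derive x 1 F dF -> is_derive x 1 G dG ->
  is_derive x 1 (fun t => F t + G t) (dF + dG).
Proof. move=> a b; exact: is_deriveD. Qed.

Lemma isdZ (F : R -> R) (x dF k : R) : is_derive x 1 F dF ->
  is_derive x 1 (fun t => k * F t) (k * dF).
Proof. move=> a; exact: is_deriveZ. Qed.

Lemma isdC (x c : R) : is_derive x 1 (fun _ : R => c) 0.
Proof. exact: is_derive_cst. Qed.

Lemma isdX n (x : R) : is_derive x 1 (fun t : R => t ^+ n) (n%:R * x ^+ n.-1).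
Proof.
apply: DeriveDef; first exact: exprn_derivable.
by rewrite exp_derive -[_ *: 1]/(_ * 1) mulr1.
Qed.

Lemma isd_poly (F : R -> R) (dF x : R) (c0 c1 c2 c3 k : R) : is_derive x 1 F dF ->
  is_derive x 1 (fun t => c0 + c1 * t + c2 * t ^+ 2 + c3 * t ^+ 3 + k * F t)
    (c1 + c2 * (2 * x) + c3 * (3 * x ^+ 2) + k * dF).
Proof.
move=> hF.
have := isdD (isdD (isdD (isdD (isdC x c0) (isdZ c1 (isdX 1 x)))
   (isdZ c2 (isdX 2 x))) (isdZ c3 (isdX 3 x))) (isdZ k hF).
move=> H; have -> : c1 + c2 * (2 * x) + c3 * (3 * x ^+ 2) + k * dF =
  0 + c1 * (1%:R * x ^+ 0) + c2 * (2%:R * x ^+ 1) + c3 * (3%:R * x ^+ 2) + k * dF.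
  by rewrite expr0 expr1 add0r !mulr1.
exact: H.
Qed.

Lemma mono_deriv (F dF : R -> R) (a b : R) : a <= b ->
  (forall x : R, is_derive x 1 F (dF x)) -> (forall x, a < x -> x < b -> 0 <= dF x) ->
  F a <= F b.
Proof.
move=> ab HF Hd.
apply: (@ger0_derive1_ndecr R F a b) => //.
- move=> x; rewrite in_itv /= => /andP[ax xb]; rewrite derive1E.
  by have [_ ->] := HF x; exact: Hd.
- apply: continuous_subspaceT => x.
  apply: differentiable_continuous; apply/derivable1_diffP.
  by have [] := HF x.
Qed.

Lemma poly_mono (F dF : R -> R) (c0 c1 c2 c3 k a b : R) : a <= b ->
  (forall x : R, is_derive x 1 F (dF x)) ->
  (forall x, a < x -> x < b -> 0 <= c1 + c2 * (2 * x) + c3 * (3 * x ^+ 2) + k * dF x) ->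
  c0 + c1 * a + c2 * a ^+ 2 + c3 * a ^+ 3 + k * F a <=
  c0 + c1 * b + c2 * b ^+ 2 + c3 * b ^+ 3 + k * F b.
Proof.
move=> ab hF hd.
apply: (@mono_deriv (fun t => c0 + c1 * t + c2 * t ^+ 2 + c3 * t ^+ 3 + k * F t)
  (fun x => c1 + c2 * (2 * x) + c3 * (3 * x ^+ 2) + k * dF x) a b ab) => //.
by move=> x; exact: isd_poly.
Qed.

End H1.
Section LA.
Variables (R : realType) (d : nat).
Implicit Types (u v w : 'rV[R]_d) (A B : 'M[R]_d).

Lemma dotE u w : (u *m w^T) 0 0 = \sum_j u 0 j * w 0 j.
Proof. by rewrite !mxE; apply: eq_bigr => j _; rewrite mxE. Qed.

Lemma qformE A v : qform A v = \sum_j (v *m A) 0 j * v 0 j.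
Proof. exact: dotE. Qed.

Lemma qformB A B v : qform (A - B) v = qform A v - qform B v.
Proof.
rewrite !qformE -sumrB; apply: eq_bigr => j _.
by rewrite mulmxBr [in LHS]mxE [(- (v *m B)) 0 j]mxE mulrBl.
Qed.

Lemma qform_scalar (a : R) v : qform (a%:M) v = a * \sum_j v 0 j ^+ 2.
Proof.
rewrite qformE mulr_sumr; apply: eq_bigr => j _.
by rewrite mul_mx_scalar mxE expr2 mulrA.
Qed.

Lemma qformZ A (c : R) v : qform A (c *: v) = c ^+ 2 * qform A v.
Proof.
rewrite !qformE mulr_sumr; apply: eq_bigr => j _.
rewrite -scalemxAl !mxE; ring.
Qed.

Lemma enorm_sqr v : enorm v ^+ 2 = \sum_j v 0 j ^+ 2.
Proof. by rewrite /enorm sqr_sqrtr // sumr_ge0 // => j _; exact: sqr_ge0. Qed.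

Lemma enorm_ge0 v : 0 <= enorm v.
Proof. exact: sqrtr_ge0. Qed.

Lemma enormZ (c : R) v : enorm (c *: v) = `|c| * enorm v.
Proof.
rewrite /enorm (eq_bigr (fun j => c ^+ 2 * v 0 j ^+ 2)); last first.
  by move=> j _; rewrite mxE exprMn.
by rewrite -mulr_sumr sqrtrM ?sqr_ge0 // sqrtr_sqr.
Qed.

Lemma cs_unit u w : \sum_j u 0 j ^+ 2 = 1 ->
  `|\sum_j w 0 j * u 0 j| <= enorm w.
Proof.
move=> hu; set s := \sum_j w 0 j * u 0 j.
have H0 : 0 <= \sum_j (w 0 j - s * u 0 j) ^+ 2 by apply: sumr_ge0 => j _; exact: sqr_ge0.
have E : \sum_j (w 0 j - s * u 0 j) ^+ 2 = \sum_j w 0 j ^+ 2 + \sum_j (- (2 * s) * (w 0 j * u 0 j)) + \sum_j (s ^+ 2 * u 0 j ^+ 2).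
  by rewrite -!big_split /=; apply: eq_bigr => j _; ring.
rewrite -!mulr_sumr -/s hu in E.
have : s ^+ 2 <= \sum_j w 0 j ^+ 2 by lra.
move=> hs; rewrite -sqrtr_sqr /enorm; exact: ler_wsqrtr.
Qed.

Lemma abs_le1 u i : \sum_j u 0 j ^+ 2 = 1 -> `|u 0 i| <= 1.
Proof.
move=> hu; have h : u 0 i ^+ 2 <= 1.
  rewrite -hu (bigD1 i) //= lerDl; apply: sumr_ge0 => j _; exact: sqr_ge0.
rewrite ler_norml; apply/andP; split; nra.
Qed.

Lemma sqr_le_of_abs (x c : R) : `|x| <= c -> x ^+ 2 <= c ^+ 2.
Proof. rewrite ler_norml => /andP[h1 h2]; nra. Qed.

Lemma spec_ub A : has_ubound [set enorm (u *m A) | u in [set u | enorm u = 1]].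
Proof.
exists (Num.sqrt (\sum_j (\sum_i `|A i j|) ^+ 2)) => _ [u /= hu <-].
have hu2 : \sum_j u 0 j ^+ 2 = 1 by rewrite -enorm_sqr hu expr1n.
rewrite /enorm; apply: ler_wsqrtr; apply: ler_sum => j _.
apply: sqr_le_of_abs; rewrite mxE.
apply: (le_trans (ler_norm_sum _ _ _)); apply: ler_sum => i _.
rewrite normrM ler_piMl //; exact: abs_le1.
Qed.

Lemma qform_spec A v : `|qform A v| <= spec_norm A * enorm v ^+ 2.
Proof.
have [E0|E0] := eqVneq (\sum_j v 0 j ^+ 2) 0.
  have v0 : forall j, v 0 j = 0.
    move=> j; apply/eqP; rewrite -sqrf_eq0; apply/eqP.
    by apply: (psumr_eq0P _ E0) => // k _; exact: sqr_ge0.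
  rewrite qformE big1 ?normr0 ?enorm_sqr ?E0 ?mulr0 // => j _.
  by rewrite v0 mulr0.
have epos : 0 < enorm v.
  rewrite lt_def enorm_ge0 andbT; apply/eqP => e0.
  by move: E0; rewrite -enorm_sqr e0 expr0n /= eqxx.
set e := enorm v.
have hv : v = e *: (e^-1 *: v) by rewrite scalerA divff ?gt_eqF // scale1r.
set u := e^-1 *: v.
have hu : enorm u = 1 by rewrite /u enormZ ger0_norm ?invr_ge0 ?ltW // mulVf ?gt_eqF.
have hu2 : \sum_j u 0 j ^+ 2 = 1 by rewrite -enorm_sqr hu expr1n.
rewrite hv qformZ normrM ger0_norm ?sqr_ge0 // mulrC ler_pM2r ?exprn_gt0 //.
rewrite qformE; apply: (le_trans (cs_unit _ hu2)).
apply: ub_le_sup; first exact: spec_ub.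
by exists u.
Qed.

End LA.
Section Core.
Variables (R : realType) (d : nat) (f : 'rV[R]_d -> R)
  (g : 'rV[R]_d -> 'rV[R]_d) (H : 'rV[R]_d -> 'M[R]_d) (a h : 'rV[R]_d).
Hypothesis df : forall x, differentiable f x.
Hypothesis hdf : forall x v, 'd f x v = (v *m (g x)^T) 0 0.
Hypothesis dg : forall x, differentiable g x.
Hypothesis hdg : forall x v, 'd g x v = v *m H x.
Hypothesis hmin : forall x, f a <= f x.

Let phi (t : R) := f (a + t *: h).
Let p (t : R) := (h *m (g (a + t *: h))^T) 0 0.
Let q (t : R) := qform (H (a + t *: h)) h.

Lemma Dphi (t : R) : is_derive t 1 phi (p t).
Proof. by rewrite /p -hdf; exact: line_is_derive. Qed.

Lemma Dp (t : R) : is_derive t 1 p (q t).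
Proof.
have DG : is_derive t 1 (fun s : R => g (a + s *: h)) (h *m H (a + t *: h)).
  by rewrite -hdg; exact: line_is_derive.
have Dj : forall j, is_derive t 1 (fun s : R => h 0 j * g (a + s *: h) 0 j)
     (h 0 j * (h *m H (a + t *: h)) 0 j).
  by move=> j; apply: isdZ; exact: (is_derive_coord 0 j DG).
have := is_derive_sum Dj; rewrite fct_sumE.
have -> : (fun x : R => \sum_(i < d) h 0 i * g (a + x *: h) 0 i) = p.
  by apply/funext => s; rewrite /p dotE.
have -> : q t = \sum_(i < d) h 0 i * (h *m H (a + t *: h)) 0 i.
  by rewrite /q qformE; apply: eq_bigr => j _; rewrite mulrC.
done.
Qed.

Lemma p0 : p 0 = 0.
Proof.
have D0 : is_derive (0:R) 1 phi 0.
  apply: (@derive1_at_min R phi (-1) 1 0) => //.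
  - by move=> t _; have [] := Dphi t.
  - by rewrite in_itv /= ltrN10 ltr01.
  - by move=> t _; rewrite /phi scale0r addr0.
have [_ e1] := Dphi 0; have [_ e2] := D0.
by rewrite -e1 e2.
Qed.

Variables (lmin lmax L : R).
Hypothesis hH : forall x, loewner_le (lmin%:M) (H x) /\ loewner_le (H x) (lmax%:M).
Hypothesis hL : forall x y, spec_norm (H x - H y) <= L * enorm (x - y).

Let e := enorm h.
Let K := L * e ^+ 3.
Let q0 := qform (H a) h.

Lemma QL x : 0 <= x -> `|q x - q0| <= K * x.
Proof.
move=> x0; rewrite /q /q0 -qformB; apply: le_trans (qform_spec _ _) _.
have := hL (a + x *: h) a; rewrite addrAC subrr add0r enormZ ger0_norm // => hl.
have -> : K * x = L * (x * e) * e ^+ 2 by rewrite /K; ring.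
apply: ler_wpM2r => //; exact: exprn_ge0 (enorm_ge0 _).
Qed.

Lemma Qlo x : lmin * e ^+ 2 <= q x.
Proof. by have [h1 _] := hH (a + x *: h); have := h1 h; rewrite qform_scalar -enorm_sqr. Qed.

Lemma Qhi : q0 <= lmax * e ^+ 2.
Proof. by have [_ h2] := hH a; have := h2 h; rewrite qform_scalar -enorm_sqr. Qed.

Lemma up1 : phi 1 - phi 0 <= q0 / 2 + K / 6.
Proof.
have w : forall t, 0 <= t -> p t <= q0 * t + K / 2 * t ^+ 2.
  move=> t t0; have := @poly_mono R p q 0 q0 (K / 2) 0 (-1) 0 t t0 Dp.
  have hyp : forall x, 0 < x -> x < t ->
      0 <= q0 + K / 2 * (2 * x) + 0 * (3 * x ^+ 2) + -1 * q x.
    move=> x x0 _; have := QL (ltW x0); rewrite ler_norml => /andP[_ h2]; lra.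
  move=> /(_ hyp); rewrite p0 expr0n /=; lra.
have := @poly_mono R phi p 0 0 (q0 / 2) (K / 6) (-1) 0 1 ler01 Dphi.
have hyp : forall x, 0 < x -> x < 1 ->
    0 <= 0 + q0 / 2 * (2 * x) + K / 6 * (3 * x ^+ 2) + -1 * p x.
  move=> x x0 _; have := w x (ltW x0); lra.
move=> /(_ hyp); rewrite !expr0n !expr1n /=; lra.
Qed.

Lemma lo1 s : 0 <= s -> s <= 1 -> q0 / 2 * s ^+ 2 - K / 6 * s ^+ 3 <= phi s - phi 0.
Proof.
move=> s0 s1.
have w : forall t, 0 <= t -> q0 * t - K / 2 * t ^+ 2 <= p t.
  move=> t t0; have := @poly_mono R p q 0 (- q0) (K / 2) 0 1 0 t t0 Dp.
  have hyp : forall x, 0 < x -> x < t ->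
      0 <= - q0 + K / 2 * (2 * x) + 0 * (3 * x ^+ 2) + 1 * q x.
    move=> x x0 _; have := QL (ltW x0); rewrite ler_norml => /andP[h1 _]; lra.
  move=> /(_ hyp); rewrite p0 expr0n /=; lra.
have := @poly_mono R phi p 0 0 (- q0 / 2) (K / 6) 1 0 s s0 Dphi.
have hyp : forall x, 0 < x -> x < s ->
    0 <= 0 + - q0 / 2 * (2 * x) + K / 6 * (3 * x ^+ 2) + 1 * p x.
  move=> x x0 _; have := w x (ltW x0); lra.
move=> /(_ hyp); rewrite !expr0n /=; lra.
Qed.

Lemma cvx s : 0 <= s -> s <= 1 ->
  phi s - lmin * e ^+ 2 / 2 * s ^+ 2 <= phi 1 - lmin * e ^+ 2 / 2.
Proof.
move=> s0 s1.
have w : forall t, 0 <= t -> lmin * e ^+ 2 * t <= p t.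
  move=> t t0; have := @poly_mono R p q 0 (- (lmin * e ^+ 2)) 0 0 1 0 t t0 Dp.
  have hyp : forall x, 0 < x -> x < t ->
      0 <= - (lmin * e ^+ 2) + 0 * (2 * x) + 0 * (3 * x ^+ 2) + 1 * q x.
    move=> x _ _; have := Qlo x; lra.
  move=> /(_ hyp); rewrite p0 expr0n /=; lra.
have := @poly_mono R phi p 0 0 (- (lmin * e ^+ 2) / 2) 0 1 s 1 s1 Dphi.
have hyp : forall x, s < x -> x < 1 ->
    0 <= 0 + - (lmin * e ^+ 2) / 2 * (2 * x) + 0 * (3 * x ^+ 2) + 1 * p x.
  move=> x sx _; have := w x (le_trans s0 (ltW sx)); lra.
move=> /(_ hyp); rewrite !expr1n /=; lra.
Qed.

End Core.
Section Ar.
Variable R : realFieldType.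

Lemma Mdef (nu lmin sl L : R) : 0 < L -> sl ^+ 2 = lmin ->
  (nu * (lmin * sl) / L) ^+ 2 = nu ^+ 2 * lmin ^+ 3 / L ^+ 2.
Proof. move=> L0 hsl; rewrite -hsl; field; lra. Qed.

Lemma cube_bound (nu lmin sl L e M : R) : 0 < L -> 0 < sl -> sl ^+ 2 = lmin -> 0 <= e ->
  sl * e <= M -> L * M <= nu * (lmin * sl) -> L * e ^+ 3 <= nu * M ^+ 2.
Proof.
move=> L0 sl0 hsl e0 hM LM.
have M0 : 0 <= M by nra.
have c1 : (sl * e) ^+ 3 <= M ^+ 3 by apply: lerXn2r => //; rewrite nnegrE; nra.
have c2 : L * (sl * e) ^+ 3 <= L * M ^+ 3 by apply: ler_wpM2l => //; exact: ltW.
have c3 : L * M ^+ 3 <= nu * M ^+ 2 * (lmin * sl).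
  have -> : L * M ^+ 3 = (L * M) * M ^+ 2 by ring.
  have -> : nu * M ^+ 2 * (lmin * sl) = (nu * (lmin * sl)) * M ^+ 2 by ring.
  by apply: ler_wpM2r => //; exact: sqr_ge0.
have c4 : L * (sl * e) ^+ 3 = L * e ^+ 3 * (lmin * sl) by rewrite -hsl; ring.
have ls0 : 0 < lmin * sl by rewrite -hsl; apply: mulr_gt0 => //; exact: exprn_gt0.
by rewrite -(ler_pM2r ls0) -c4; apply: le_trans c2 c3.
Qed.

Lemma A2 (nu lmin sl L e r M : R) : 0 < L -> 0 < sl -> sl ^+ 2 = lmin -> 0 <= e ->
  0 <= r -> sl * e <= r -> r <= M -> L * M = nu * (lmin * sl) -> 0 < nu -> nu <= 1 ->
  r ^+ 2 / 2 + L * e ^+ 3 / 6 <= M ^+ 2.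
Proof.
move=> L0 sl0 hsl e0 r0 ser rM LM nu0 nu1.
have h1 : L * e ^+ 3 <= nu * r ^+ 2.
  apply: (@cube_bound nu lmin sl L e r L0 sl0 hsl e0 ser); rewrite -LM; apply: ler_wpM2l => //; exact: ltW.
have h2 : r ^+ 2 <= M ^+ 2 by apply: lerXn2r => //; rewrite nnegrE //; exact: le_trans rM.
have h3 : nu * r ^+ 2 <= r ^+ 2 by apply: ler_piMl => //; exact: sqr_ge0.
have h4 : 0 <= r ^+ 2 by exact: sqr_ge0.
lra.
Qed.

Lemma A1 (nu lmin sl L e r M phis phi0 phi1 : R) : 0 < L -> 0 < sl -> sl ^+ 2 = lmin ->
  0 <= e -> 0 < e ^+ 2 -> 0 < nu -> nu <= 1 -> 0 < M -> M < r -> sl * e <= r ->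
  L * M = nu * (lmin * sl) ->
  r ^+ 2 / 2 * (M / r) ^+ 2 - L * e ^+ 3 / 6 * (M / r) ^+ 3 <= phis - phi0 ->
  phis - lmin * e ^+ 2 / 2 * (M / r) ^+ 2 <= phi1 - lmin * e ^+ 2 / 2 ->
  phi1 <= phi0 + nu ^+ 2 / 3 * lmin ^+ 3 / L ^+ 2 -> False.
Proof.
move=> L0 sl0 hsl e0 e20 nu0 nu1 M0 Mr ser LM lo cv hyp.
have r0 : 0 < r by exact: lt_trans Mr.
set s := M / r in lo cv.
have s0 : 0 < s by rewrite /s divr_gt0.
have s1 : s < 1 by rewrite /s ltr_pdivrMr // mul1r.
have rs : r * s = M by rewrite /s; field; lra.
clearbody s.
have ses : sl * (e * s) <= M by rewrite -rs mulrA; apply: ler_wpM2r => //; exact: ltW.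
have eq_le_tmp : L * M <= nu * (lmin * sl) by rewrite LM.
have cb := @cube_bound nu lmin sl L (e * s) M L0 sl0 hsl (mulr_ge0 e0 (ltW s0)) ses eq_le_tmp.
have E1 : L * e ^+ 3 / 6 * s ^+ 3 = L * (e * s) ^+ 3 / 6 by rewrite exprMn; ring.
have E2 : r ^+ 2 / 2 * s ^+ 2 = M ^+ 2 / 2 by rewrite -rs exprMn; ring.
have E3 := @Mdef nu lmin sl L L0 hsl.
have lm0 : 0 < lmin by rewrite -hsl exprn_gt0.
have s2 : s ^+ 2 < 1 by rewrite expr2; nra.
have pos : 0 < lmin * e ^+ 2 / 2 * (1 - s ^+ 2).
  apply: mulr_gt0; last by lra.
  by apply: divr_gt0 => //; exact: mulr_gt0.
have M2 : 0 <= M ^+ 2 by exact: sqr_ge0.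
have h3 : nu * M ^+ 2 <= M ^+ 2 by apply: ler_piMl.
rewrite E1 E2 in lo.
have E4 : nu ^+ 2 / 3 * lmin ^+ 3 / L ^+ 2 = (nu * (lmin * sl) / L) ^+ 2 / 3.
  by rewrite E3; ring.
have MM : nu * (lmin * sl) / L = M by rewrite -LM; field; lra.
rewrite E4 MM in hyp.
lra.
Qed.

End Ar.

Unset Implicit Arguments.

Theorem lemmaB2 (R : realType) (d : nat) (f : 'rV[R]_d -> R)
  (g : 'rV[R]_d -> 'rV[R]_d) (H : 'rV[R]_d -> 'M[R]_d)
  (lmin lmax L : R) (xstar : 'rV[R]_d) :
  (* f is C^2 with gradient g and Hessian H *)
  (forall x, differentiable f x) ->
  (forall x v, 'd f x v = (v *m (g x)^T) 0 0) ->
  (forall x, differentiable g x) ->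
  (forall x v, 'd g x v = v *m H x) ->
  continuous H ->
  (* spectral bounds on the Hessian *)
  0 < lmin -> lmin <= lmax ->
  (forall x, loewner_le (lmin%:M) (H x) /\ loewner_le (H x) (lmax%:M)) ->
  (* x* is the unique minimizer *)
  (forall x, f xstar <= f x) ->
  (forall x, f x = f xstar -> x = xstar) ->
  (* assumption (L) *)
  0 < L ->
  (forall x y, spec_norm (H x - H y) <= L * enorm (x - y)) ->
  forall nu : R, 0 < nu -> nu <= 1 ->
    nbhdNbar f xstar lmin L (nu ^+ 2 / 3) `<=` nbhdN xstar (H xstar) lmin L nu /\
    nbhdN xstar (H xstar) lmin L nu `<=` nbhdNbar f xstar lmin L (nu ^+ 2).
Proof.
move=> df hdf dg hdg cH lpos lle hH hmin huniq Lpos hL nu nu0 nu1.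
set sl := Num.sqrt lmin.
have sl0 : 0 < sl by rewrite sqrtr_gt0.
have hsl : sl ^+ 2 = lmin by rewrite sqr_sqrtr // ltW.
have Hx : forall x, xstar + 1 *: (x - xstar) = x by move=> x; rewrite scale1r addrC subrK.
have H0 : forall h, xstar + 0 *: h = xstar by move=> h; rewrite scale0r addr0.
have q0lo : forall h, lmin * enorm h ^+ 2 <= qform (H xstar) h.
  by move=> h; have [h1 _] := hH xstar; have := h1 h; rewrite qform_scalar -enorm_sqr.
have q0ge : forall h, 0 <= qform (H xstar) h.
  move=> h; apply: le_trans (q0lo h); apply: mulr_ge0; first exact: ltW.
  exact: sqr_ge0.
have r2 : forall h, Anorm (H xstar) h ^+ 2 = qform (H xstar) h.
  by move=> h; rewrite /Anorm sqr_sqrtr.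
have rge : forall h, 0 <= Anorm (H xstar) h by move=> h; exact: sqrtr_ge0.
have ser : forall h, sl * enorm h <= Anorm (H xstar) h.
  move=> h; have -> : sl * enorm h = Num.sqrt (lmin * enorm h ^+ 2).
    by rewrite sqrtrM ?ltW // sqrtr_sqr ger0_norm // enorm_ge0.
  exact: ler_wsqrtr (q0lo h).
set M := nu * (lmin * sl) / L.
have LM : L * M = nu * (lmin * sl) by rewrite /M; field; lra.
have M0 : 0 < M by rewrite /M; apply: divr_gt0 => //; apply: mulr_gt0 => //; exact: mulr_gt0.
have EM := @Mdef R nu lmin sl L Lpos hsl.
split.
- move=> x; rewrite /nbhdNbar /nbhdN /= => hx.
  rewrite -/sl -/M leNgt; apply/negP => Mr.
  set h := x - xstar in Mr *.
  set r := Anorm (H xstar) h in Mr.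
  have r0 : 0 < r by exact: lt_trans Mr.
  have s0 : 0 <= M / r by apply: divr_ge0; exact: ltW.
  have s1 : M / r <= 1 by rewrite ler_pdivrMr // mul1r; exact: ltW.
  have e0 := enorm_ge0 h.
  have hq := Qhi xstar h hH.
  have q0p : 0 < qform (H xstar) h by rewrite -r2 -/r exprn_gt0.
  have e20 : 0 < enorm h ^+ 2 by nra.
  have lo := @lo1 _ _ f g H xstar h df hdf dg hdg hmin L hL (M / r) s0 s1.
  have cv := @cvx _ _ f g H xstar h df hdf dg hdg hmin lmin lmax hH (M / r) s0 s1.
  rewrite H0 -r2 -/r in lo.
  rewrite Hx in cv.
  exact: (@A1 R nu lmin sl L (enorm h) r M _ (f xstar) (f x) Lpos sl0 hsl e0 e20 nu0 nu1 M0 Mr (ser h) LM lo cv hx).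
- move=> x; rewrite /nbhdN /nbhdNbar /= => hx.
  rewrite -/sl -/M in hx.
  set h := x - xstar in hx.
  have up := @up1 _ _ f g H xstar h df hdf dg hdg hmin L hL.
  rewrite Hx H0 -r2 in up.
  have := @A2 R nu lmin sl L (enorm h) (Anorm (H xstar) h) M Lpos sl0 hsl (enorm_ge0 h) (rge h) (ser h) hx LM nu0 nu1.
  rewrite EM => hA.
  lra.
Qed.
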